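(* Let $L$ be one of the logics $\mathbf{K4}_h$, $\mathbf{KD4}_h$, $\mathbf{S4}_h$, and let $G(L)$ be the corresponding sequent calculus $G(\mathbf{K4}_h)$, $G(\mathbf{KD4}_h)$, $G(\mathbf{S4}_h)$ described in the context. Then $G(L)$ is equivalent to $L$: for all finite multisets $\Gamma,\Delta$ of formulas of $\mathcal{L}_\infty$, the sequent $\Gamma\Rightarrow\Delta$ is provable in $G(L)$ if and only if $L\vdash \bigwedge\Gamma\rightarrow\bigvee\Delta$ (empty conjunction $=\top$, empty disjunction $=\bot$); in particular $L\vdash A$ iff $G(L)\vdash\ \Rightarrow A$.
   Context: The language $\mathcal{L}_\infty$ consists of modal formulas built from propositional atoms, $\bot,\top$, the connectives $\neg,\wedge,\vee,\rightarrow$ and infinitely many unary modalities $\Box_n$ ($n\in\mathbb{N}$), with the restriction that $\Box_n A$ is a formula only if $n$ is strictly greater than the index of every box occurring in $A$. All formulas below are assumed to be in $\mathcal{L}_\infty$ (so axiom instances and rule applications are only those producing $\mathcal{L}_\infty$-formulas). Hilbert systems: consider the axiom schemes (for all $n\ge 0$) $\mathbf{H}$: $\Box_n A\rightarrow\Box_{n+1}A$; $\mathbf{K}_h$: $\Box_n(A\rightarrow B)\rightarrow(\Box_nA\rightarrow\Box_nB)$; $\mathbf{4}_h$: $\Box_nA\rightarrow\Box_{n+1}\Box_nA$; $\mathbf{D}_h$: $\neg\Box_n\bot$; $\mathbf{T}_h$: $\Box_nA\rightarrow A$. For a set $X$ of schemes, $L(X)$ is the least set of $\mathcal{L}_\infty$-formulas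 containing all classical propositional tautologies (over $\mathcal{L}_\infty$-formulas) and all instances of the schemes in $X$, and closed under modus ponens and the rule: from $A$ infer $\Box_nA$ for any $n$ greater than all box indices in $A$. $\mathbf{K4}_h=L(\mathbf{H},\mathbf{K}_h,\mathbf{4}_h)$, $\mathbf{KD4}_h=L(\mathbf{H},\mathbf{K}_h,\mathbf{4}_h,\mathbf{D}_h)$, $\mathbf{S4}_h=L(\mathbf{H},\mathbf{K}_h,\mathbf{4}_h,\mathbf{T}_h)$. Sequent calculi: sequents $\Gamma\Rightarrow\Delta$ with finite multisets. All three systems contain the axioms $A\Rightarrow A$ and $\bot\Rightarrow$, the structural rules of left/right weakening, left/right contraction and cut (from $\Gamma_0\Rightarrow\Delta_0,A$ and $\Gamma_1,A\Rightarrow\Delta_1$ infer $\Gamma_0,\Gamma_1\Rightarrow\Delta_0,\Delta_1$), and the usual classical (LK-style) left and right rules for $\wedge,\vee,\rightarrow,\neg$. Modal rules (in each, the side condition is $n_i<n$ for all $i\in I$): $\Box_{4_h}R$: from $\{\sigma_r\}_{r\in R},\{\gamma_i,\Box_{n_i}\gamma_i\}_{i\in I}\Rightarrow A$ infer $\{\Box_n\sigma_r\}_{r\in R},\{\Box_{n_i}\gamma_i\}_{i\in I}\Rightarrow\Box_nA$; $\Box_{D_h}R$: from $\{\sigma_r\}_{r\in R},\{\gamma_i,\Box_{n_i}\gamma_i\}_{i\in I}\Rightarrow$ infer $\{\Box_n\sigma_r\}_{r\in R},\{\Box_{n_i}\gamma_i\}_{i\in I}\Rightarrow$; $\Box_{S_h}R$: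 from $\{\sigma_r\}_{r\in R},\{\Box_{n_i}\gamma_i\}_{i\in I}\Rightarrow A$ infer $\{\Box_n\sigma_r\}_{r\in R},\{\Box_{n_i}\gamma_i\}_{i\in I}\Rightarrow\Box_nA$; $\Box_hL$: from $\Gamma,A\Rightarrow\Delta$ infer $\Gamma,\Box_nA\Rightarrow\Delta$. $G(\mathbf{K4}_h)$ = axioms + structural + propositional rules + $\Box_{4_h}R$; $G(\mathbf{KD4}_h)$ = $G(\mathbf{K4}_h)$ + $\Box_{D_h}R$; $G(\mathbf{S4}_h)$ = axioms + structural + propositional rules + $\Box_{S_h}R$ + $\Box_hL$. *)

(* Defs.v *)
From Stdlib Require Import List Permutation Arith.
Import ListNotations.

Inductive form : Type :=
| Var : nat -> form
| Bot : form
| Top : form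
| Neg : form -> form
| And : form -> form -> form
| Or  : form -> form -> form
| Imp : form -> form -> form
| Box : nat -> form -> form.

Fixpoint bnd (A : form) (n : nat) : Prop :=
  match A with
  | Var _ | Bot | Top => True
  | Neg B => bnd B n
  | And B C | Or B C | Imp B C => bnd B n /\ bnd C n
  | Box m B => m < n /\ bnd B n
  end.

(* wf A : A is a formula of L_infinity *)
Fixpoint wf (A : form) : Prop :=
  match A with
  | Var _ | Bot | Top => True
  | Neg B => wf B
  | And B C | Or B C | Imp B C => wf B /\ wf C
  | Box m B => wf B /\ bnd B m
  end.

(* Classical propositional evaluation: atoms and boxed formulas are
   treated as propositional variables. *)
Fixpoint eval (v : form -> bool) (A : form) : bool :=
  match A with
  | Var p => v (Var p)
  | Bot => false
  | Top => true
  | Neg B => negb (eval v B)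
  | And B C => eval v B && eval v C
  | Or B C => eval v B || eval v C
  | Imp B C => implb (eval v B) (eval v C)
  | Box m B => v (Box m B)
  end.

Definition taut (A : form) : Prop := forall v, eval v A = true.

Inductive logic : Type := K4h | KD4h | S4h.

Inductive hprf (L : logic) : form -> Prop :=
| h_taut A : wf A -> taut A -> hprf L A
| h_H n A : wf (Imp (Box n A) (Box (S n) A)) ->
    hprf L (Imp (Box n A) (Box (S n) A))
| h_K n A B : wf (Imp (Box n (Imp A B)) (Imp (Box n A) (Box n B))) ->
    hprf L (Imp (Box n (Imp A B)) (Imp (Box n A) (Box n B)))
| h_4 n A : wf (Imp (Box n A) (Box (S n) (Box n A))) ->
    hprf L (Imp (Box n A) (Box (S n) (Box n A)))
| h_D n : L = KD4h -> hprf L (Neg (Box n Bot))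
| h_T n A : L = S4h -> wf (Imp (Box n A) A) -> hprf L (Imp (Box n A) A)
| h_mp A B : hprf L (Imp A B) -> hprf L A -> hprf L B
| h_nec n A : bnd A n -> hprf L A -> hprf L (Box n A).

Definition bx (p : nat * form) : form := Box (fst p) (snd p).

(* Sequent calculi G(L); multisets are lists modulo the exchange rule g_perm. *)
Inductive gprf (L : logic) : list form -> list form -> Prop :=
| g_id A : wf A -> gprf L [A] [A]
| g_bot : gprf L [Bot] []
| g_top : gprf L [] [Top]
| g_perm G D G' D' : Permutation G G' -> Permutation D D' ->
    gprf L G D -> gprf L G' D'
| g_wL A G D : wf A -> gprf L G D -> gprf L (A :: G) D
| g_wR A G D : wf A -> gprf L G D -> gprf L G (A :: D)
| g_cL A G D : gprf L (A :: A :: G) D -> gprf L (A :: G) D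
| g_cR A G D : gprf L G (A :: A :: D) -> gprf L G (A :: D)
| g_cut A G0 D0 G1 D1 : gprf L G0 (A :: D0) -> gprf L (A :: G1) D1 ->
    gprf L (G0 ++ G1) (D0 ++ D1)
| g_andL A B G D : gprf L (A :: B :: G) D -> gprf L (And A B :: G) D
| g_andR A B G D : gprf L G (A :: D) -> gprf L G (B :: D) ->
    gprf L G (And A B :: D)
| g_orL A B G D : gprf L (A :: G) D -> gprf L (B :: G) D ->
    gprf L (Or A B :: G) D
| g_orR A B G D : gprf L G (A :: B :: D) -> gprf L G (Or A B :: D)
| g_impL A B G D : gprf L G (A :: D) -> gprf L (B :: G) D ->
    gprf L (Imp A B :: G) D
| g_impR A B G D : gprf L (A :: G) (B :: D) -> gprf L G (Imp A B :: D)
| g_negL A G D : gprf L G (A :: D) -> gprf L (Neg A :: G) D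
| g_negR A G D : gprf L (A :: G) D -> gprf L G (Neg A :: D)
| g_box4R n A (sig : list form) (gam : list (nat * form)) :
    (L = K4h \/ L = KD4h) ->
    Forall (fun p => fst p < n) gam ->
    wf (Box n A) -> Forall (fun s => wf (Box n s)) sig ->
    gprf L (sig ++ map snd gam ++ map bx gam) [A] ->
    gprf L (map (Box n) sig ++ map bx gam) [Box n A]
| g_boxDR n (sig : list form) (gam : list (nat * form)) :
    L = KD4h ->
    Forall (fun p => fst p < n) gam ->
    Forall (fun s => wf (Box n s)) sig ->
    gprf L (sig ++ map snd gam ++ map bx gam) [] ->
    gprf L (map (Box n) sig ++ map bx gam) []
| g_boxSR n A (sig : list form) (gam : list (nat * form)) :
    L = S4h ->
    Forall (fun p => fst p < n) gam ->
    wf (Box n A) -> Forall (fun s => wf (Box n s)) sig ->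
    gprf L (sig ++ map bx gam) [A] ->
    gprf L (map (Box n) sig ++ map bx gam) [Box n A]
| g_boxL n A G D : L = S4h -> wf (Box n A) ->
    gprf L (A :: G) D -> gprf L (Box n A :: G) D.

Fixpoint bigAnd (G : list form) : form :=
  match G with
  | [] => Top
  | [A] => A
  | A :: G' => And A (bigAnd G')
  end.

Fixpoint bigOr (D : list form) : form :=
  match D with
  | [] => Bot
  | [A] => A
  | A :: D' => Or A (bigOr D')
  end.

(* Main.v *)
Require Import Defs.
From Stdlib Require Import List Permutation Arith Lia Bool.
Import ListNotations.

Ltac bt :=
  repeat match goal with
  | |- context [forallb ?f ?l] => destruct (forallb f l)
  | |- context [existsb ?f ?l] => destruct (existsb f l)
  | |- context [eval ?v ?A] => destruct (eval v A)
  | |- context [?v (Box ?n ?A)] => destruct (v (Box n A))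
  | |- context [?v (Var ?n)] => destruct (v (Var n))
  end; simpl; intros; try reflexivity; try discriminate; auto.

Lemma eval_bigAnd v G : eval v (bigAnd G) = forallb (eval v) G.
Proof.
  induction G as [|a G IH]; [reflexivity|].
  destruct G as [|b G]; simpl in *.
  - rewrite andb_true_r; reflexivity.
  - rewrite IH; reflexivity.
Qed.

Lemma eval_bigOr v D : eval v (bigOr D) = existsb (eval v) D.
Proof.
  induction D as [|a D IH]; [reflexivity|].
  destruct D as [|b D]; simpl in *.
  - rewrite orb_false_r; reflexivity.
  - rewrite IH; reflexivity.
Qed.

Lemma eval_seqf v G D : eval v (Imp (bigAnd G) (bigOr D)) =
  implb (forallb (eval v) G) (existsb (eval v) D).
Proof. cbn [eval]. rewrite eval_bigAnd, eval_bigOr. reflexivity. Qed.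

Lemma wf_bigAnd G : Forall wf G -> wf (bigAnd G).
Proof.
  induction 1 as [|a G Ha HG IH]; simpl; auto.
  destruct G; simpl in *; auto.
Qed.

Lemma wf_bigOr G : Forall wf G -> wf (bigOr G).
Proof.
  induction 1 as [|a G Ha HG IH]; simpl; auto.
  destruct G; simpl in *; auto.
Qed.

Lemma bnd_bigAnd n G : Forall (fun x => bnd x n) G -> bnd (bigAnd G) n.
Proof.
  induction 1 as [|a G Ha HG IH]; simpl; auto.
  destruct G; simpl in *; auto.
Qed.

Lemma wf_seqf G D : Forall wf G -> Forall wf D -> wf (Imp (bigAnd G) (bigOr D)).
Proof. intros; simpl; split; [apply wf_bigAnd|apply wf_bigOr]; auto. Qed.

Lemma bnd_mono A : forall m n, bnd A m -> m <= n -> bnd A n.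
Proof.
  induction A; simpl; intuition eauto; lia.
Qed.

Lemma forallb_perm {T} (f : T -> bool) l l' : Permutation l l' -> forallb f l = forallb f l'.
Proof.
  induction 1; simpl; auto.
  - rewrite IHPermutation; auto.
  - destruct (f x), (f y); reflexivity.
  - congruence.
Qed.

Lemma existsb_perm {T} (f : T -> bool) l l' : Permutation l l' -> existsb f l = existsb f l'.
Proof.
  induction 1; simpl; auto.
  - rewrite IHPermutation; auto.
  - destruct (f x), (f y); reflexivity.
  - congruence.
Qed.

Lemma Forall_perm' {T} (P : T -> Prop) l l' : Permutation l l' -> Forall P l -> Forall P l'.
Proof.
  intros Hp H. rewrite Forall_forall in *. intros x Hx.
  apply H. eapply Permutation_in; [apply Permutation_sym; eauto| auto].
Qed.

Lemma hprf_wf L A : hprf L A -> wf A.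
Proof.
  induction 1; simpl in *; intuition.
Qed.

Lemma hmp1 L A B : hprf L A -> wf B -> (forall v, eval v A = true -> eval v B = true) -> hprf L B.
Proof.
  intros HA HB Hv. apply h_mp with A; auto.
  apply h_taut. simpl; split; auto. eapply hprf_wf; eauto.
  intros v; simpl. specialize (Hv v). destruct (eval v A); simpl; auto.
Qed.

Lemma hmp2 L A B C : hprf L A -> hprf L B -> wf C ->
  (forall v, eval v A = true -> eval v B = true -> eval v C = true) -> hprf L C.
Proof.
  intros HA HB HC Hv. apply h_mp with B; auto. apply h_mp with A; auto.
  apply h_taut. simpl; repeat split; auto; eapply hprf_wf; eauto.
  intros v; simpl. specialize (Hv v). destruct (eval v A), (eval v B); simpl; auto.
Qed.

Lemma htrans L A B C : hprf L (Imp A B) -> hprf L (Imp B C) -> hprf L (Imp A C).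
Proof.
  intros H1 H2. apply hprf_wf in H1 as W1. apply hprf_wf in H2 as W2.
  eapply hmp2; [exact H1|exact H2| simpl in *; tauto|].
  intros v; simpl. bt.
Qed.

Lemma hmono L : forall m n g, m <= n -> wf g -> bnd g m -> hprf L (Imp (Box m g) (Box n g)).
Proof.
  intros m n g Hmn Hw Hb. induction n.
  - assert (m = 0) by lia; subst. apply h_taut. simpl; tauto. intros v; simpl; bt.
  - destruct (Nat.eq_dec m (S n)).
    + subst. apply h_taut. simpl; tauto. intros v; simpl; bt.
    + eapply htrans. apply IHn; lia. apply h_H. simpl; repeat split; auto;
      eapply bnd_mono; eauto; lia.
Qed.

Lemma hlift4 L : forall m n g, m < n -> wf g -> bnd g m -> hprf L (Imp (Box m g) (Box n (Box m g))).
Proof.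
  intros m n g Hmn Hw Hb. eapply htrans. apply h_4.
  simpl; repeat split; auto; try lia; eapply bnd_mono; eauto; lia.
  apply hmono. lia. simpl; auto. simpl; split; [lia|]; eapply bnd_mono; eauto.
Qed.

Lemma conj_intro L X : forall D, Forall wf D -> wf X ->
  (forall Y, In Y D -> hprf L (Imp X Y)) -> hprf L (Imp X (bigAnd D)).
Proof.
  induction 1 as [|a D Ha HD IH]; intros HX Hin.
  - apply h_taut. simpl; auto. intros v; simpl; bt.
  - eapply hmp2. apply (Hin a); simpl; auto. apply IH; auto. intros; apply Hin; simpl; auto.
    split; auto. apply wf_bigAnd; constructor; auto.
    intros v. cbn [eval]. rewrite !eval_bigAnd. simpl. bt.
Qed.

Lemma in_conj L Y G : In Y G -> Forall wf G -> hprf L (Imp (bigAnd G) Y).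
Proof.
  intros Hi Hw. apply h_taut. simpl; split; [apply wf_bigAnd; auto|].
  rewrite Forall_forall in Hw; auto.
  intros v. cbn [eval]. rewrite eval_bigAnd.
  destruct (forallb (eval v) G) eqn:E; simpl; auto.
  rewrite forallb_forall in E. rewrite E; auto.
Qed.

Lemma box_lift L n : forall G A, Forall wf G -> Forall (fun x => bnd x n) G -> wf A -> bnd A n ->
  hprf L (Imp (bigAnd G) A) -> hprf L (Imp (bigAnd (map (Box n) G)) (Box n A)).
Proof.
  induction G as [|X G IH]; intros A HW HB HA HbA H.
  - eapply hmp1 with (Box n A). apply h_nec; auto. eapply hmp1; eauto.
    all: try (intros v; simpl; bt). all: simpl; auto.
  - inversion HW; inversion HB; subst.
    assert (H1 : hprf L (Imp (bigAnd (map (Box n) G)) (Box n (Imp X A)))).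
    { apply IH; auto. simpl; auto. simpl; auto.
      eapply hmp1; eauto. simpl; split; [apply wf_bigAnd|]; auto.
      intros v. cbn [eval]. rewrite !eval_bigAnd. simpl. bt. }
    eapply hmp2. exact H1. apply (h_K L n X A). simpl; tauto.
    split; [|simpl; auto]. apply wf_bigAnd. change (Forall wf (map (Box n) (X :: G))).
    rewrite Forall_map. rewrite Forall_forall in *. intros; simpl; auto.
    intros v. cbn [eval]. rewrite !eval_bigAnd. simpl. bt.
Qed.

Lemma gprf_wf L G D : gprf L G D -> Forall wf G /\ Forall wf D.
Proof.
  induction 1; repeat match goal with H : _ /\ _ |- _ => destruct H end;
  repeat match goal with H : Forall _ (_ :: _) |- _ => inversion H; subst; clear H end;
  try (split; repeat constructor; simpl; auto; fail).
  1: split; eapply Forall_perm'; eauto.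
  all: repeat match goal with H : Forall _ (_ ++ _) |- _ => apply Forall_app in H as [? ?] end;
    split; try (apply Forall_app; split); try rewrite Forall_map; auto; repeat constructor; auto.
  all: rewrite Forall_map in *; auto.
Qed.

Lemma box_supp L n sig gam :
  Forall (fun p => fst p < n) gam -> Forall (fun s => wf (Box n s)) sig -> Forall wf (map bx gam) ->
  forall Z, In Z (sig ++ map snd gam ++ map bx gam) ->
  hprf L (Imp (bigAnd (map (Box n) sig ++ map bx gam)) (Box n Z)).
Proof.
  intros Hg Hs Hb Z HZ.
  assert (Hw : Forall wf (map (Box n) sig ++ map bx gam)).
  { apply Forall_app; split; auto. rewrite Forall_map; auto. }
  rewrite Forall_forall in Hg, Hs, Hb.
  apply in_app_iff in HZ as [HZ|HZ]; [|apply in_app_iff in HZ as [HZ|HZ]].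
  - apply in_conj; auto. apply in_app_iff; left; apply in_map; auto.
  - apply in_map_iff in HZ as [p [<- Hp]].
    specialize (Hb (bx p) (in_map _ _ _ Hp)). specialize (Hg p Hp).
    destruct p as [m g]; simpl in *. destruct Hb.
    eapply htrans. apply (in_conj L (Box m g)); auto. apply in_app_iff; right.
    apply (in_map bx _ (m,g)); auto.
    apply hmono; auto; lia.
  - apply in_map_iff in HZ as [p [<- Hp]].
    specialize (Hb (bx p) (in_map _ _ _ Hp)). specialize (Hg p Hp).
    destruct p as [m g]; simpl in *. destruct Hb.
    eapply htrans. apply (in_conj L (Box m g)); auto. apply in_app_iff; right.
    apply (in_map bx _ (m,g)); auto.
    apply hlift4; auto.
Qed.

Lemma modal_core L n G G' A :
  (forall Z, In Z G -> hprf L (Imp (bigAnd G') (Box n Z))) ->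
  Forall wf G' -> Forall wf G -> Forall (fun x => bnd x n) G -> wf A -> bnd A n ->
  hprf L (Imp (bigAnd G) A) -> hprf L (Imp (bigAnd G') (Box n A)).
Proof.
  intros HZ HW' HW HB HA HbA H.
  eapply htrans; [|apply box_lift; eauto].
  apply conj_intro. rewrite Forall_map. rewrite Forall_forall in *. intros; simpl; auto.
  apply wf_bigAnd; auto.
  intros Y HY. apply in_map_iff in HY as [Z [<- HZ']]. auto.
Qed.

Lemma bnd_prem n sig gam :
  Forall (fun p => fst p < n) gam -> Forall (fun s => wf (Box n s)) sig -> Forall wf (map bx gam) ->
  Forall wf (sig ++ map snd gam ++ map bx gam) /\
  Forall (fun x => bnd x n) (sig ++ map snd gam ++ map bx gam).
Proof.
  intros Hg Hs Hb. rewrite !Forall_forall in *.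
  split; intros x Hx; apply in_app_iff in Hx as [Hx|Hx];
  try (apply in_app_iff in Hx as [Hx|Hx]);
  try (apply Hs in Hx; simpl in Hx; tauto);
  apply in_map_iff in Hx as [[m g] [<- Hp]];
  specialize (Hb (bx (m,g)) (in_map _ _ _ Hp)); specialize (Hg _ Hp); simpl in *;
  intuition; eapply bnd_mono; eauto; lia.
Qed.

Ltac sq := intros v; rewrite ?eval_seqf; simpl; bt.

Lemma sound L G D : gprf L G D -> hprf L (Imp (bigAnd G) (bigOr D)).
Proof.
  intros H. pose proof H as Hc. induction H;
  destruct (gprf_wf _ _ _ Hc) as [W1 W2]; pose proof (wf_seqf _ _ W1 W2) as W.
  - apply h_taut; auto. sq.
  - apply h_taut; auto. sq.
  - apply h_taut; auto. sq.
  - eapply hmp1. apply IHgprf; auto. auto.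
    intros v; rewrite !eval_seqf. rewrite (forallb_perm _ _ _ H), (existsb_perm _ _ _ H0). auto.
  - eapply hmp1. apply IHgprf; auto. auto. sq.
  - eapply hmp1. apply IHgprf; auto. auto. sq.
  - eapply hmp1. apply IHgprf; auto. auto. sq.
  - eapply hmp1. apply IHgprf; auto. auto. sq.
  - eapply hmp2. apply IHgprf1; auto. apply IHgprf2; auto. auto.
    intros v; rewrite !eval_seqf, !forallb_app, !existsb_app. simpl. bt.
  - eapply hmp1. apply IHgprf; auto. auto. sq.
  - eapply hmp2. apply IHgprf1; auto. apply IHgprf2; auto. auto. sq.
  - eapply hmp2. apply IHgprf1; auto. apply IHgprf2; auto. auto. sq.
  - eapply hmp1. apply IHgprf; auto. auto. sq.
  - eapply hmp2. apply IHgprf1; auto. apply IHgprf2; auto. auto. sq.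
  - eapply hmp1. apply IHgprf; auto. auto. sq.
  - eapply hmp1. apply IHgprf; auto. auto. sq.
  - eapply hmp1. apply IHgprf; auto. auto. sq.
  -
    pose proof W1 as W1x; apply Forall_app in W1x as [_ Wb].
    destruct (bnd_prem n sig gam) as [P1 P2]; auto.
    change (hprf L (Imp (bigAnd (map (Box n) sig ++ map bx gam)) (Box n A))).
    eapply modal_core with (G := sig ++ map snd gam ++ map bx gam).
    + apply box_supp; auto.
    + exact W1.
    + exact P1.
    + exact P2.
    + simpl in H1; tauto.
    + simpl in H1; tauto.
    + apply IHgprf; auto.
  -
    pose proof W1 as W1x; apply Forall_app in W1x as [_ Wb].
    destruct (bnd_prem n sig gam) as [P1 P2]; auto.
    assert (Hb : hprf L (Imp (bigAnd (map (Box n) sig ++ map bx gam)) (Box n Bot))).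
    { eapply modal_core with (G := sig ++ map snd gam ++ map bx gam).
      + apply box_supp; auto.
      + exact W1.
      + exact P1.
      + exact P2.
      + simpl; auto.
      + simpl; auto.
      + apply IHgprf; auto. }
    eapply hmp2. exact Hb. apply (h_D L n H). auto.
    intros v. rewrite eval_seqf. cbn [eval]. rewrite eval_bigAnd. simpl. bt.
  -
    pose proof W1 as W1x; apply Forall_app in W1x as [_ Wb].
    destruct (bnd_prem n sig gam) as [P1 P2]; auto.
    change (hprf L (Imp (bigAnd (map (Box n) sig ++ map bx gam)) (Box n A))).
    eapply modal_core with (G := sig ++ map bx gam).
    + intros Z HZ. apply box_supp; auto. apply in_app_iff in HZ as [HZ|HZ];
      apply in_app_iff; auto. right; apply in_app_iff; auto.
    + exact W1.
    + apply Forall_app in P1 as [? P1]. apply Forall_app in P1 as [? ?].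
      apply Forall_app; auto.
    + apply Forall_app in P2 as [? P2]. apply Forall_app in P2 as [? ?].
      apply Forall_app; auto.
    + simpl in H1; tauto.
    + simpl in H1; tauto.
    + apply IHgprf; auto.
  - eapply hmp2. apply IHgprf; auto. apply (h_T L n A H).
    simpl in *; tauto. auto. sq.
Qed.

Definition form_eq_dec : forall x y : form, {x = y} + {x <> y}.
Proof. decide equality; apply Nat.eq_dec. Defined.

Fixpoint fsize (A : form) : nat :=
  match A with
  | Neg B => S (fsize B)
  | And B C | Or B C | Imp B C => S (fsize B + fsize C)
  | _ => 1
  end.

Fixpoint lsize (l : list form) : nat :=
  match l with [] => 0 | A :: l' => fsize A + lsize l' end.

Lemma lsize_app l1 l2 : lsize (l1 ++ l2) = lsize l1 + lsize l2.
Proof. induction l1; simpl; lia. Qed.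

Definition compound (A : form) : bool :=
  match A with Neg _ | And _ _ | Or _ _ | Imp _ _ => true | _ => false end.

Definition valid (G D : list form) : Prop :=
  forall v, forallb (eval v) G = true -> existsb (eval v) D = true.

Lemma wk_all L G0 D0 G1 D1 G D : gprf L G0 D0 -> Forall wf G1 -> Forall wf D1 ->
  Permutation (G1 ++ G0) G -> Permutation (D1 ++ D0) D -> gprf L G D.
Proof.
  intros H HG HD P1 P2. eapply g_perm; [exact P1|exact P2|].
  clear P1 P2. induction HD; simpl.
  - induction HG; simpl; auto. apply g_wL; auto.
  - apply g_wR; auto.
Qed.

Lemma Forall_mid {T} (P : T -> Prop) l1 a l2 : Forall P (l1 ++ a :: l2) -> P a /\ Forall P (l1 ++ l2).
Proof.
  rewrite !Forall_forall. intros H. split.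
  - apply H. apply in_app_iff; simpl; auto.
  - intros x Hx. apply H. apply in_app_iff in Hx as [|]; apply in_app_iff; simpl; auto.
Qed.

Lemma perm_mid {T} (l1 l2 : list T) a : Permutation ((l1 ++ l2) ++ [a]) (l1 ++ a :: l2).
Proof. eapply perm_trans; [apply Permutation_app_comm|]. simpl. apply Permutation_middle. Qed.

Lemma existsb_false {T} (f : T -> bool) l x : existsb f l = false -> In x l -> f x = false.
Proof.
  intros E Hx. destruct (f x) eqn:F; auto.
  assert (existsb f l = true) by (apply existsb_exists; eauto). congruence.
Qed.

Ltac vt Hv := intros v; specialize (Hv v); revert Hv; simpl; bt.

Lemma lk_aux L : forall n G D, lsize G + lsize D < n -> Forall wf G -> Forall wf D ->
  valid G D -> gprf L G D.
Proof.
  induction n as [|n IH]; intros G D Hs HG HD Hv; [lia|].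
  destruct (existsb compound G) eqn:EG.
  { apply existsb_exists in EG as [A [HA HcA]].
    apply in_split in HA as [G1 [G2 ->]].
    apply g_perm with (A :: G1 ++ G2) D; [apply Permutation_middle|apply Permutation_refl|].
    apply Forall_mid in HG as [HA HG].
    rewrite lsize_app in Hs; simpl in Hs. rewrite <- (Nat.add_comm (lsize G2)) in Hs.
    assert (Hs' : fsize A + lsize (G1 ++ G2) + lsize D <= n) by (rewrite lsize_app; lia).
    assert (Hv' : valid (A :: G1 ++ G2) D).
    { intros v Hx. apply Hv. simpl in *. rewrite forallb_app in *. simpl in *. revert Hx. bt. }
    clear Hv Hs. set (G' := G1 ++ G2) in *. clearbody G'.
    destruct A; try discriminate; simpl in HA, Hs'; try destruct HA.
    - apply g_negL. apply IH; [simpl; lia | repeat constructor; auto | repeat constructor; auto | vt Hv'].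
    - apply g_andL. apply IH; [simpl; lia | repeat constructor; auto | repeat constructor; auto | vt Hv'].
    - apply g_orL; (apply IH; [simpl; lia | repeat constructor; auto | repeat constructor; auto | vt Hv']).
    - apply g_impL; (apply IH; [simpl; lia | repeat constructor; auto | repeat constructor; auto | vt Hv']). }
  destruct (existsb compound D) eqn:ED.
  { apply existsb_exists in ED as [A [HA HcA]].
    apply in_split in HA as [D1 [D2 ->]].
    apply g_perm with G (A :: D1 ++ D2); [apply Permutation_refl|apply Permutation_middle|].
    apply Forall_mid in HD as [HA HD].
    rewrite lsize_app in Hs; simpl in Hs.
    assert (Hs' : fsize A + lsize G + lsize (D1 ++ D2) <= n) by (rewrite lsize_app; lia).
    assert (Hv' : valid G (A :: D1 ++ D2)).
    { intros v Hx. specialize (Hv v Hx). simpl in *. rewrite existsb_app in *. simpl in *. revert Hv. bt. }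
    clear Hv Hs. set (D' := D1 ++ D2) in *. clearbody D'.
    destruct A; try discriminate; simpl in HA, Hs'; try destruct HA.
    - apply g_negR. apply IH; [simpl; lia | repeat constructor; auto | repeat constructor; auto | vt Hv'].
    - apply g_andR; (apply IH; [simpl; lia | repeat constructor; auto | repeat constructor; auto | vt Hv']).
    - apply g_orR. apply IH; [simpl; lia | repeat constructor; auto | repeat constructor; auto | vt Hv'].
    - apply g_impR; (apply IH; [simpl; lia | repeat constructor; auto | repeat constructor; auto | vt Hv']). }
  clear IH Hs.
  destruct (in_dec form_eq_dec Bot G) as [HB|HB].
  { apply in_split in HB as [G1 [G2 ->]]. apply Forall_mid in HG as [_ HG].
    eapply wk_all. apply g_bot. exact HG. exact HD. apply perm_mid. rewrite app_nil_r; auto. }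
  destruct (in_dec form_eq_dec Top D) as [HT|HT].
  { apply in_split in HT as [D1 [D2 ->]]. apply Forall_mid in HD as [_ HD].
    eapply wk_all. apply g_top. exact HG. exact HD. rewrite app_nil_r; auto. apply perm_mid. }
  destruct (existsb (fun A => if in_dec form_eq_dec A D then true else false) G) eqn:EC.
  { apply existsb_exists in EC as [A [HA HAD]].
    destruct (in_dec form_eq_dec A D) as [HAD'|]; [|discriminate].
    apply in_split in HA as [G1 [G2 ->]]. apply Forall_mid in HG as [HwA HG].
    apply in_split in HAD' as [D1 [D2 ->]]. apply Forall_mid in HD as [_ HD].
    eapply wk_all. apply (g_id L A HwA). exact HG. exact HD. apply perm_mid. apply perm_mid. }
  exfalso.
  set (v := fun X => if in_dec form_eq_dec X G then true else false).
  assert (H1 : forallb (eval v) G = true).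
  { apply forallb_forall. intros x Hx. pose proof (existsb_false _ _ _ EG Hx) as Cx.
    destruct x; try discriminate; simpl; auto.
    all: try contradiction; unfold v; match goal with |- context [in_dec form_eq_dec ?X ?GG] => destruct (in_dec form_eq_dec X GG) end; tauto. }
  apply Hv in H1. apply existsb_exists in H1 as [x [Hx Ex]].
  pose proof (existsb_false _ _ _ ED Hx) as Cx.
  destruct x; try discriminate; simpl in Ex.
  - unfold v in Ex. destruct (in_dec form_eq_dec (Var n0) G) as [Hi|]; [|discriminate].
    pose proof (existsb_false _ _ _ EC Hi) as E2. simpl in E2.
    destruct (in_dec form_eq_dec (Var n0) D); [discriminate|contradiction].
  - contradiction.
  - unfold v in Ex. destruct (in_dec form_eq_dec (Box n0 x) G) as [Hi|]; [|discriminate].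
    pose proof (existsb_false _ _ _ EC Hi) as E2. simpl in E2.
    destruct (in_dec form_eq_dec (Box n0 x) D); [discriminate|contradiction].
Qed.

Lemma lk_complete L G D : Forall wf G -> Forall wf D -> valid G D -> gprf L G D.
Proof. intros. apply (lk_aux L (S (lsize G + lsize D))); auto. Qed.

Ltac lkc := apply lk_complete; [repeat constructor; simpl in *; tauto
                                |repeat constructor; simpl in *; tauto
                                | intros v; simpl; bt].

Lemma h2g L A : hprf L A -> gprf L [] [A].
Proof.
  induction 1.
  - apply lk_complete; [constructor|repeat constructor; auto|].
    intros v _; simpl; rewrite H0; reflexivity.
  - destruct H as [[Hw Hb] [_ Hb']]. apply g_impR.
    destruct L.
    1,2: apply (g_box4R _ (S n) A [] [(n, A)]); [auto|repeat constructor; simpl; lia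
          |simpl; auto|constructor|]; lkc.
    apply (g_boxSR _ (S n) A [] [(n, A)]); [auto|repeat constructor; simpl; lia
          |simpl; auto|constructor|].
    simpl. apply g_boxL; auto. simpl; auto. lkc.
  - destruct H as [[[HwA HwB] [HbA HbB]] [[HwA' HbA'] [HwB' HbB']]].
    apply g_impR. apply g_impR.
    destruct L.
    1,2: apply (g_box4R _ n B [A; Imp A B] []); [auto|constructor|simpl; auto
          |repeat constructor; simpl; auto|]; lkc.
    apply (g_boxSR _ n B [A; Imp A B] []); [auto|constructor|simpl; auto
          |repeat constructor; simpl; auto|]; lkc.
  - destruct H as [[Hw Hb] [_ [Hlt Hb']]]. apply g_impR.
    destruct L.
    1,2: apply (g_box4R _ (S n) (Box n A) [] [(n, A)]); [auto|repeat constructor; simpl; lia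
          |simpl; auto|constructor|]; lkc.
    apply (g_boxSR _ (S n) (Box n A) [] [(n, A)]); [auto|repeat constructor; simpl; lia
          |simpl; auto|constructor|]; lkc.
  - subst. apply g_negR. apply (g_boxDR _ n [Bot] []); [auto|constructor|repeat constructor|].
    simpl. apply g_bot.
  - subst. destruct H0 as [[Hw Hb] _]. apply g_impR. apply g_boxL; auto. simpl; auto. lkc.
  - apply hprf_wf in H as HW. destruct HW as [HwA HwB].
    assert (H2 : gprf L [Imp A B; A] [B]) by lkc.
    pose proof (g_cut L (Imp A B) [] [] [A] [B] IHhprf1 H2) as H3. simpl in H3.
    exact (g_cut L A [] [] [] [B] IHhprf2 H3).
  - apply hprf_wf in H0 as HW.
    destruct L.
    1,2: apply (g_box4R _ n A [] []); [auto|constructor|simpl; auto|constructor|exact IHhprf].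
    apply (g_boxSR _ n A [] []); [auto|constructor|simpl; auto|constructor|exact IHhprf].
Qed.

Theorem theorem3p7 (L : logic) :
  (forall G D : list form, Forall wf G -> Forall wf D ->
     (gprf L G D <-> hprf L (Imp (bigAnd G) (bigOr D)))) /\
  (forall A : form, wf A -> (hprf L A <-> gprf L nil (A :: nil))).
Proof.
  split.
  - intros G D HG HD. split; [apply sound|].
    intros H. apply h2g in H.
    assert (H2 : gprf L (Imp (bigAnd G) (bigOr D) :: G) D).
    { apply lk_complete. constructor; auto. apply wf_seqf; auto. auto.
      intros v Hv. cbn [forallb] in Hv. rewrite eval_seqf in Hv.
      destruct (forallb (eval v) G); simpl in Hv; [|discriminate].
      destruct (existsb (eval v) D); auto. }
    exact (g_cut L _ [] [] G D H H2).
  - intros A HA. split; [apply h2g|].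
    intros H. apply sound in H. eapply hmp1; eauto.
Qed.
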